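(* Let $n\ge2$ and let $T_1,\dots,T_n$ be distinct triangles in $E$, and let $S$ be the set of vertices of the polygon $\bigcap_{i=1}^nT_i$. Then $|S|=3n$.
   Context: For $d>0$ let $C_d=\{(x,y)\in\mathbb{R}^2: x^2+y^2\le d\}$, and $C=C_1$. $E$ is the set of all equilateral triangles $T\subseteq C$ whose vertices lie on the boundary of $C$. *)

(* Defs.v *)
From Stdlib Require Import Reals List.
Open Scope R_scope.

Definition point := (R * R)%type.

Definition sqdist (p q : point) : R :=
  (fst p - fst q) ^ 2 + (snd p - snd q) ^ 2.

Definition Cd (d : R) (p : point) : Prop := fst p ^ 2 + snd p ^ 2 <= d.
Definition Cdisk : point -> Prop := Cd 1.

Definition on_circle (p : point) : Prop := fst p ^ 2 + snd p ^ 2 = 1.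

Definition triangle (A B Q : point) (p : point) : Prop :=
  exists a b c : R, 0 <= a /\ 0 <= b /\ 0 <= c /\ a + b + c = 1 /\
    p = (a * fst A + b * fst B + c * fst Q, a * snd A + b * snd B + c * snd Q).

Definition in_E (T : point -> Prop) : Prop :=
  (forall p, T p -> Cdisk p) /\
  exists A B Q : point,
    on_circle A /\ on_circle B /\ on_circle Q /\
    0 < sqdist A B /\ sqdist A B = sqdist B Q /\ sqdist B Q = sqdist Q A /\
    (forall p, T p <-> triangle A B Q p).

Definition vertex (K : point -> Prop) (p : point) : Prop :=
  K p /\
  ~ (exists (x y : point) (t : R), K x /\ K y /\ x <> y /\ 0 < t < 1 /\
       p = (t * fst x + (1 - t) * fst y, t * snd x + (1 - t) * snd y)).

(* intersection of T_0, ..., T_{n-1} *)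
Definition big_inter (n : nat) (T : nat -> point -> Prop) (p : point) : Prop :=
  forall i, (i < n)%nat -> T i p.

(* Main.v *)
Require Import Defs.
From Stdlib Require Import Reals List Lra Lia Psatz Classical ClassicalEpsilon.
Open Scope R_scope.

Definition dot (p q : point) : R := fst p * fst q + snd p * snd q.
Definition cross (p q : point) : R := fst p * snd q - snd p * fst q.
Definition unitv (p:point) : Prop := fst p ^ 2 + snd p ^ 2 = 1.

Lemma dot_le1 a b : unitv a -> unitv b -> dot a b <= 1.
Proof. unfold unitv, dot; intros.
  pose proof (Rle_0_sqr (fst a - fst b)); pose proof (Rle_0_sqr (snd a - snd b)); unfold Rsqr in *; nra. Qed.
Lemma dot_gem1 a b : unitv a -> unitv b -> -1 <= dot a b.
Proof. unfold unitv, dot; intros.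
  pose proof (Rle_0_sqr (fst a + fst b)); pose proof (Rle_0_sqr (snd a + snd b)); unfold Rsqr in *; nra. Qed.

Lemma neq_pair (a b : point) : a <> b -> fst a <> fst b \/ snd a <> snd b.
Proof. destruct a as [a1 a2], b as [b1 b2]; simpl; intros H.
  destruct (Req_dec a1 b1); destruct (Req_dec a2 b2); subst; auto. Qed.

Lemma sq_pos x : x <> 0 -> 0 < x * x.
Proof. intros H; pose proof (Rsqr_pos_lt x H); unfold Rsqr in *; lra. Qed.

Lemma dot_lt1 a b : unitv a -> unitv b -> a <> b -> dot a b < 1.
Proof. intros Ha Hb Hne. destruct (neq_pair a b Hne) as [H|H];
  [pose proof (sq_pos (fst a - fst b)) | pose proof (sq_pos (snd a - snd b))];
  unfold unitv, dot in *; nra. Qed.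

Lemma lagrange a b : dot a b ^ 2 + cross a b ^ 2 = (fst a ^2 + snd a ^2) * (fst b ^2 + snd b^2).
Proof. unfold dot, cross; ring. Qed.

Lemma sq_eq x y : x ^ 2 = y ^ 2 -> x = y \/ x = - y.
Proof. intros H. assert ((x - y) * (x + y) = 0) by nra.
  destruct (Rmult_integral _ _ H0); [left|right]; lra. Qed.

Lemma vec_eq p u w : fst p ^ 2 + snd p ^ 2 <> 0 -> dot p u = dot p w -> cross p u = cross p w -> u = w.
Proof. intros H0 H1 H2. destruct u as [u1 u2], w as [w1 w2].
  assert (E1 : (fst p ^ 2 + snd p ^ 2) * u1 = dot p (u1,u2) * fst p - cross p (u1,u2) * snd p) by (unfold dot, cross; simpl; ring).
  assert (E2 : (fst p ^ 2 + snd p ^ 2) * w1 = dot p (w1,w2) * fst p - cross p (w1,w2) * snd p) by (unfold dot, cross; simpl; ring).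
  assert (E3 : (fst p ^ 2 + snd p ^ 2) * u2 = dot p (u1,u2) * snd p + cross p (u1,u2) * fst p) by (unfold dot, cross; simpl; ring).
  assert (E4 : (fst p ^ 2 + snd p ^ 2) * w2 = dot p (w1,w2) * snd p + cross p (w1,w2) * fst p) by (unfold dot, cross; simpl; ring).
  rewrite H1, H2 in E1, E3. f_equal; apply (Rmult_eq_reg_l _ _ _ (eq_trans E1 (eq_sym E2)) H0) || idtac.
  apply (Rmult_eq_reg_l _ _ _ (eq_trans E3 (eq_sym E4)) H0). Qed.

Lemma sum_sq0 x y : x ^ 2 + y ^ 2 = 0 -> x = 0 /\ y = 0.
Proof. intros H. pose proof (Rle_0_sqr x); pose proof (Rle_0_sqr y); unfold Rsqr in *.
  assert (x * x = 0) by nra. assert (y * y = 0) by nra.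
  apply Rmult_integral in H2; apply Rmult_integral in H3. tauto. Qed.

Lemma p_nz p a : dot p a = 1/2 -> fst p ^ 2 + snd p ^ 2 <> 0.
Proof. unfold dot; intros H C.
  pose proof (Rle_0_sqr (fst p)); pose proof (Rle_0_sqr (snd p)); unfold Rsqr in *.
  assert (fst p * fst p = 0) by nra. assert (snd p * snd p = 0) by nra.
  apply Rmult_integral in H2; apply Rmult_integral in H3.
  assert (fst p = 0) by tauto. assert (snd p = 0) by tauto. rewrite H4, H5 in H. lra. Qed.

Lemma three_active p a b c : unitv a -> unitv b -> unitv c ->
  dot p a = 1/2 -> dot p b = 1/2 -> dot p c = 1/2 -> a = b \/ a = c \/ b = c.
Proof. intros Ha Hb Hc Da Db Dc. pose proof (p_nz _ _ Da) as Hp.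
  pose proof (lagrange p a) as La. pose proof (lagrange p b) as Lb. pose proof (lagrange p c) as Lc.
  unfold unitv in *. rewrite Ha in La. rewrite Hb in Lb. rewrite Hc in Lc.
  assert (cross p a ^ 2 = cross p b ^ 2) by (rewrite Da in La; rewrite Db in Lb; lra).
  assert (cross p a ^ 2 = cross p c ^ 2) by (rewrite Da in La; rewrite Dc in Lc; lra).
  destruct (sq_eq _ _ H) as [E|E].
  - left. apply (vec_eq p); auto; congruence.
  - destruct (sq_eq _ _ H0) as [E'|E'].
    + right; left. apply (vec_eq p); auto; congruence.
    + right; right. apply (vec_eq p); auto; [congruence| lra]. Qed.

Lemma cross_nz p a b : unitv a -> unitv b -> a <> b -> dot p a = 1/2 -> dot p b = 1/2 -> cross a b <> 0.
Proof. intros Ha Hb Hne Da Db C. pose proof (lagrange a b) as L. unfold unitv in *.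
  rewrite Ha, Hb, C in L. assert (dot a b ^ 2 = 1) by lra.
  destruct (sq_eq (dot a b) 1 ltac:(lra)) as [E|E].
  - pose proof (dot_lt1 a b Ha Hb Hne); lra.
  - destruct (sum_sq0 (fst a + fst b) (snd a + snd b)) as [H1 H2].
    { unfold dot in *. nra. }
    unfold dot in *. assert (Fb : fst b = - fst a) by lra. assert (Sb : snd b = - snd a) by lra.
    rewrite Fb, Sb in Db. lra. Qed.

Lemma zero_vec a b z : cross a b <> 0 -> dot z a = 0 -> dot z b = 0 -> fst z = 0 /\ snd z = 0.
Proof. intros Hc Ha Hb.
  assert (E1 : fst z * cross a b = snd b * dot z a - snd a * dot z b) by (unfold dot, cross; ring).
  assert (E2 : snd z * cross a b = fst a * dot z b - fst b * dot z a) by (unfold dot, cross; ring).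
  rewrite Ha, Hb in E1, E2. split.
  - apply (Rmult_eq_reg_r (cross a b)); auto; lra.
  - apply (Rmult_eq_reg_r (cross a b)); auto; lra. Qed.

Lemma two_lines a b x y : unitv a -> unitv b -> a <> b ->
  dot x a = 1/2 -> dot x b = 1/2 -> dot y a = 1/2 -> dot y b = 1/2 -> x = y.
Proof. intros Ha Hb Hne Xa Xb Ya Yb. pose proof (cross_nz x a b Ha Hb Hne Xa Xb) as Hc.
  destruct (zero_vec a b (fst x - fst y, snd x - snd y) Hc) as [E1 E2];
  unfold dot in *; simpl in *; try lra.
  destruct x, y; simpl in *; f_equal; lra. Qed.

Definition fval (v u : point) : R := (1 - dot v u) / (2 * cross v u).
Definition Pt (v : point) (t : R) : point := (fst v / 2 - t * snd v, snd v / 2 + t * fst v).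
Fixpoint amin (g : nat -> R) (x : nat) (l : list nat) : nat :=
  match l with nil => x | y :: l' => amin g (if Rlt_dec (g y) (g x) then y else x) l' end.
Definition cands (m:nat) (N : nat -> point) k :=
  filter (fun j => if Rlt_dec 0 (cross (N k) (N j)) then true else false) (seq 0 m).
Definition rnx m N k := match cands m N k with nil => k
  | j :: l => amin (fun j => fval (N k) (N j)) j l end.
Definition vert m N k := Pt (N k) (fval (N k) (N (rnx m N k))).
Definition Kset m N (p : point) := forall k, (k < m)%nat -> dot p (N k) <= 1/2.

Lemma amin_in g x l : In (amin g x l) (x :: l).
Proof. revert x; induction l as [|a l IH]; intros x; simpl. left; auto.
  destruct (Rlt_dec (g a) (g x)).
  - destruct (IH a) as [E|E]; rewrite <- ?E; simpl; tauto.
  - destruct (IH x) as [E|E]; rewrite <- ?E; simpl; tauto. Qed.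

Lemma amin_le g x l : forall y, In y (x::l) -> g (amin g x l) <= g y.
Proof. revert x; induction l as [|a l IH]; intros x y Hy; simpl in *.
  - destruct Hy as [<-|[]]; lra.
  - set (x' := if Rlt_dec (g a) (g x) then a else x).
    assert (Hx' : g x' <= g x /\ g x' <= g a) by (unfold x'; destruct (Rlt_dec (g a) (g x)); lra).
    assert (Hm : g (amin g x' l) <= g x') by (apply IH; left; auto).
    destruct Hy as [<-|[<-|Hy]]; try lra. apply IH; right; auto. Qed.

Lemma rnx_spec m N k : (k < m)%nat -> (exists j, (j < m)%nat /\ 0 < cross (N k) (N j)) ->
  (rnx m N k < m)%nat /\ 0 < cross (N k) (N (rnx m N k)) /\
  forall j, (j < m)%nat -> 0 < cross (N k) (N j) -> fval (N k) (N (rnx m N k)) <= fval (N k) (N j).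
Proof. intros Hk [j0 [Hj0 Hc0]].
  assert (Hin : forall j, In j (cands m N k) <-> (j < m)%nat /\ 0 < cross (N k) (N j)).
  { intros j. unfold cands. rewrite filter_In, in_seq.
    destruct (Rlt_dec 0 (cross (N k) (N j))); split; intros H; try tauto; try lia;
    try (destruct H as [_ H]; discriminate); try (destruct H; contradiction). }
  unfold rnx. destruct (cands m N k) as [|j l] eqn:E.
  - exfalso. apply (proj2 (Hin j0)). auto.
  - pose proof (amin_in (fun j => fval (N k) (N j)) j l) as H1.
    apply Hin in H1. destruct H1 as [H1 H2]. repeat split; auto.
    intros j' Hj' Hc'. apply (amin_le (fun j => fval (N k) (N j))). apply Hin; auto. Qed.

Lemma dot_Pt v t u : dot (Pt v t) u = dot v u / 2 + t * cross v u.
Proof. unfold dot, Pt, cross; simpl; field. Qed.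

Lemma Pt_decomp p v : unitv v -> dot p v = 1/2 -> p = Pt v (cross v p).
Proof. intros Hu Hd. destruct p as [p1 p2], v as [v1 v2]; unfold unitv, dot, Pt, cross in *; cbn [fst snd] in *.
  f_equal.
  - replace (v1 / 2) with (v1 * (p1 * v1 + p2 * v2)) by (rewrite Hd; field).
    transitivity (p1 * (v1 ^ 2 + v2 ^ 2)); [rewrite Hu; ring| ring].
  - replace (v2 / 2) with (v2 * (p1 * v1 + p2 * v2)) by (rewrite Hd; field).
    transitivity (p2 * (v1 ^ 2 + v2 ^ 2)); [rewrite Hu; ring| ring]. Qed.

Lemma cross_self v : cross v v = 0.
Proof. unfold cross; ring. Qed.
Lemma cross_anti v u : cross u v = - cross v u.
Proof. unfold cross; ring. Qed.
Lemma dot_comm u v : dot u v = dot v u.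
Proof. unfold dot; ring. Qed.

Section dummy. End dummy.

Lemma vert_props m N k :
  (forall k, (k<m)%nat -> unitv (N k)) ->
  (forall k, (k<m)%nat -> exists j, (j<m)%nat /\ 0 < cross (N k) (N j)) ->
  (k < m)%nat ->
  Kset m N (vert m N k) /\ dot (vert m N k) (N k) = 1/2 /\
  dot (vert m N k) (N (rnx m N k)) = 1/2 /\ (rnx m N k < m)%nat /\
  0 < cross (N k) (N (rnx m N k)).
Proof. intros HU HE Hk. destruct (rnx_spec m N k Hk (HE k Hk)) as [Hr [Hc Hmin]].
  set (r := rnx m N k) in *. set (v := N k) in *. set (w := N r) in *.
  assert (Hvw : v <> w) by (intros E; rewrite <- E, cross_self in Hc; lra).
  pose proof (dot_lt1 v w (HU k Hk) (HU r Hr) Hvw) as Hlt.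
  assert (Ht : 0 < fval v w) by (unfold fval; apply Rdiv_lt_0_compat; lra).
  unfold vert; fold r v w. repeat split; auto.
  - intros j Hj. rewrite dot_Pt. pose proof (dot_le1 v (N j) (HU k Hk) (HU j Hj)).
    destruct (Rlt_dec 0 (cross v (N j))) as [Hp|Hp].
    + specialize (Hmin j Hj Hp). fold v w in Hmin.
      assert (H2 : fval v w * cross v (N j) <= fval v (N j) * cross v (N j)) by (apply Rmult_le_compat_r; lra).
      replace (fval v (N j) * cross v (N j)) with ((1 - dot v (N j)) / 2) in H2 by (unfold fval; field; lra).
      lra.
    + apply Rnot_lt_le in Hp.
      assert (0 <= fval v w * - cross v (N j)) by (apply Rmult_le_pos; lra). lra.
  - rewrite dot_Pt, cross_self. pose proof (HU k Hk) as H. unfold unitv in H.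
    assert (dot v v = 1) by (transitivity (fst v ^ 2 + snd v ^ 2); [unfold dot; ring | exact H]). lra.
  - rewrite dot_Pt. unfold fval. field. lra. Qed.

Lemma min_slack m (P : nat -> Prop) (g : nat -> R) :
  (forall j, (j < m)%nat -> P j -> 0 < g j) ->
  exists e, 0 < e /\ e <= 1 /\ forall j, (j < m)%nat -> P j -> e <= g j.
Proof. induction m as [|m IH]; intros H.
  - exists 1. split; [lra|split;[lra|]]. intros; lia.
  - destruct IH as [e [He1 [He2 He3]]]. { intros j Hj; apply H; lia. }
    destruct (classic (P m)) as [Pm|Pm].
    + pose proof (H m ltac:(lia) Pm). exists (Rmin e (g m)). split; [apply Rmin_pos; lra|split].
      * pose proof (Rmin_l e (g m)); lra.
      * intros j Hj Pj. destruct (Nat.eq_dec j m) as [->|Hne].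
        -- apply Rmin_r.
        -- pose proof (Rmin_l e (g m)). pose proof (He3 j ltac:(lia) Pj). lra.
    + exists e. split; [lra|split;[lra|]]. intros j Hj Pj. destruct (Nat.eq_dec j m) as [->|Hne].
      * contradiction.
      * apply He3; auto; lia. Qed.

Lemma dot_comb x y t u : dot (t * fst x + (1 - t) * fst y, t * snd x + (1 - t) * snd y) u
  = t * dot x u + (1 - t) * dot y u.
Proof. unfold dot; simpl; ring. Qed.

Lemma ext_char m N p :
  (forall k, (k<m)%nat -> unitv (N k)) ->
  (forall k k', (k<m)%nat -> (k'<m)%nat -> N k = N k' -> k = k') ->
  vertex (Kset m N) p <-> Kset m N p /\ exists k1 k2, (k1<m)%nat /\ (k2<m)%nat /\ k1 <> k2 /\
     dot p (N k1) = 1/2 /\ dot p (N k2) = 1/2.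
Proof. intros HU HI. split.
  - intros [HK Hnx]. split; auto. apply NNPP; intros Hno.
    assert (Hd : exists d, unitv d /\ forall j, (j<m)%nat -> dot p (N j) = 1/2 -> dot d (N j) = 0).
    { destruct (classic (exists k, (k<m)%nat /\ dot p (N k) = 1/2)) as [[k0 [Hk0 Ha0]]|Hn].
      - exists (- snd (N k0), fst (N k0)). split.
        + pose proof (HU k0 Hk0). unfold unitv in *; simpl. lra.
        + intros j Hj Ha. destruct (Nat.eq_dec j k0) as [->|Hne].
          * unfold dot; simpl; ring.
          * exfalso; apply Hno; exists j, k0; auto.
      - exists (1, 0). split. unfold unitv; simpl; lra.
        intros j Hj Ha. exfalso; apply Hn; eauto. }
    destruct Hd as [d [Hdu Hd]].
    destruct (min_slack m (fun j => dot p (N j) <> 1/2) (fun j => 1/2 - dot p (N j))) as [e [He1 [He2 He3]]].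
    { intros j Hj Hne. specialize (HK j Hj). lra. }
    apply Hnx. exists (fst p + e * fst d, snd p + e * snd d), (fst p - e * fst d, snd p - e * snd d), (1/2).
    assert (Ex : forall s u, dot (fst p + s * fst d, snd p + s * snd d) u = dot p u + s * dot d u)
      by (intros; unfold dot; simpl; ring).
    split; [|split; [|split; [|split]]].
    + intros j Hj. rewrite Ex. destruct (Req_dec (dot p (N j)) (1/2)) as [Ha|Ha].
      * rewrite (Hd j Hj Ha). lra.
      * pose proof (He3 j Hj Ha). pose proof (dot_le1 d (N j) Hdu (HU j Hj)).
        assert (e * dot d (N j) <= e * 1) by (apply Rmult_le_compat_l; lra). lra.
    + intros j Hj. replace (fst p - e * fst d, snd p - e * snd d) with (fst p + (-e) * fst d, snd p + (-e) * snd d)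
        by (f_equal; ring). rewrite Ex. destruct (Req_dec (dot p (N j)) (1/2)) as [Ha|Ha].
      * rewrite (Hd j Hj Ha). lra.
      * pose proof (He3 j Hj Ha). pose proof (dot_gem1 d (N j) Hdu (HU j Hj)).
        assert (e * (- dot d (N j)) <= e * 1) by (apply Rmult_le_compat_l; lra). lra.
    + intros E. injection E as E1 E2. assert (fst d = 0) by (apply (Rmult_eq_reg_l e); lra).
      assert (snd d = 0) by (apply (Rmult_eq_reg_l e); lra). unfold unitv in Hdu.
      rewrite H, H0 in Hdu. lra.
    + lra.
    + destruct p; simpl; f_equal; field.
  - intros [HK [k1 [k2 [H1 [H2 [Hne [A1 A2]]]]]]]. split; auto.
    intros [x [y [t [Kx [Ky [Hxy [Ht Hp]]]]]]]. apply Hxy.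
    assert (Hab : N k1 <> N k2) by (intros E; apply Hne; apply HI; auto).
    assert (F : forall k, (k<m)%nat -> dot p (N k) = 1/2 -> dot x (N k) = 1/2 /\ dot y (N k) = 1/2).
    { intros k Hk Ha. rewrite Hp, dot_comb in Ha. pose proof (Kx k Hk). pose proof (Ky k Hk).
      split; nra. }
    destruct (F k1 H1 A1), (F k2 H2 A2).
    apply (two_lines (N k1) (N k2)); auto. Qed.

Lemma NoDup_map_on {A B} (f : A -> B) l :
  NoDup l -> (forall x y, In x l -> In y l -> f x = f y -> x = y) -> NoDup (map f l).
Proof. induction l as [|a l IH]; intros Hn Hi; simpl; constructor.
  - inversion Hn; subst. intros Hin. apply in_map_iff in Hin. destruct Hin as [x [Ex Hx]].
    assert (x = a) by (apply Hi; simpl; auto). subst. contradiction.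
  - inversion Hn; subst. apply IH; auto. intros; apply Hi; simpl; auto. Qed.

Theorem abstract_poly m N :
  (forall k, (k<m)%nat -> unitv (N k)) ->
  (forall k k', (k<m)%nat -> (k'<m)%nat -> N k = N k' -> k = k') ->
  (forall k, (k<m)%nat -> exists j, (j<m)%nat /\ 0 < cross (N k) (N j)) ->
  exists S, NoDup S /\ length S = m /\ forall p, In p S <-> vertex (Kset m N) p.
Proof. intros HU HI HE. exists (map (vert m N) (seq 0 m)). split; [|split].
  - apply NoDup_map_on. apply seq_NoDup.
    intros k k' Hk Hk' E. apply in_seq in Hk; apply in_seq in Hk'.
    destruct Hk as [_ Hk]; destruct Hk' as [_ Hk']; simpl in Hk, Hk'.
    destruct (Nat.eq_dec k k') as [|Hne]; auto. exfalso.
    destruct (vert_props m N k HU HE Hk) as [_ [A1 [A2 [R1 C1]]]].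
    destruct (vert_props m N k' HU HE Hk') as [_ [B1 [B2 [R2 C2]]]].
    rewrite <- E in B1, B2.
    assert (Hinj : forall a b, (a<m)%nat -> (b<m)%nat -> a <> b -> N a <> N b)
      by (intros a b Ha Hb Hab EE; apply Hab; apply HI; auto).
    assert (Hrk : rnx m N k <> k) by (intros EE; rewrite EE, cross_self in C1; lra).
    assert (Hrk' : rnx m N k' <> k') by (intros EE; rewrite EE, cross_self in C2; lra).
    assert (E1 : k' = rnx m N k).
    { destruct (Nat.eq_dec k' (rnx m N k)) as [|H]; auto.
      destruct (three_active _ _ _ _ (HU k Hk) (HU _ R1) (HU k' Hk') A1 A2 B1) as [X|[X|X]];
      exfalso; revert X; apply Hinj; auto. }
    assert (E2 : k = rnx m N k').
    { destruct (Nat.eq_dec k (rnx m N k')) as [|H]; auto.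
      destruct (three_active _ _ _ _ (HU k' Hk') (HU _ R2) (HU k Hk) B1 B2 A1) as [X|[X|X]];
      exfalso; revert X; apply Hinj; auto. }
    rewrite <- E1 in C1. rewrite <- E2 in C2. rewrite cross_anti in C2. lra.
  - rewrite length_map, length_seq; auto.
  - intros p. rewrite ext_char by auto. split.
    + intros Hin. apply in_map_iff in Hin. destruct Hin as [k [<- Hk]].
      apply in_seq in Hk. destruct Hk as [_ Hk]; simpl in Hk.
      destruct (vert_props m N k HU HE Hk) as [HK [A1 [A2 [R1 C1]]]].
      split; auto. exists k, (rnx m N k). repeat split; auto.
      intros EE; rewrite <- EE, cross_self in C1; lra.
    + intros [HK [k1 [k2 [H1 [H2 [Hne [A1 A2]]]]]]].
      assert (Hab : N k1 <> N k2) by (intros E; apply Hne; apply HI; auto).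
      pose proof (cross_nz p _ _ (HU k1 H1) (HU k2 H2) Hab A1 A2) as Hc.
      assert (Main : forall a b, (a<m)%nat -> (b<m)%nat -> dot p (N a) = 1/2 -> dot p (N b) = 1/2 ->
                0 < cross (N a) (N b) -> p = vert m N a).
      { intros a b Ha Hb Da Db Cab.
        destruct (rnx_spec m N a Ha (HE a Ha)) as [Hr [Hcr Hmin]].
        pose proof (Pt_decomp p (N a) (HU a Ha) Da) as Ep.
        set (s := cross (N a) p) in Ep.
        assert (Hs : forall j, (j<m)%nat -> 0 < cross (N a) (N j) -> s <= fval (N a) (N j)).
        { intros j Hj Cj. pose proof (HK j Hj) as Kj. rewrite Ep, dot_Pt in Kj.
          unfold fval. apply (Rmult_le_reg_r (2 * cross (N a) (N j))); [lra|].
          unfold Rdiv. rewrite Rmult_assoc, Rinv_l by lra. lra. }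
        assert (Hsb : s = fval (N a) (N b)).
        { rewrite Ep, dot_Pt in Db. unfold fval. field_simplify_eq; [lra|lra]. }
        unfold vert. rewrite Ep at 1. f_equal.
        pose proof (Hmin b Hb Cab). pose proof (Hs _ Hr Hcr). lra. }
      apply in_map_iff.
      destruct (Rlt_dec 0 (cross (N k1) (N k2))) as [Cp|Cp].
      * exists k1. split; [symmetry; apply (Main k1 k2); auto|apply in_seq; lia].
      * exists k2. split; [symmetry; apply (Main k2 k1); auto|apply in_seq; lia].
        rewrite cross_anti. lra. Qed.

Definition norm3 (A B Q : point) : Prop :=
  unitv A /\ unitv B /\ unitv Q /\ dot A B = -1/2 /\ dot B Q = -1/2 /\ dot Q A = -1/2 /\
  fst A + fst B + fst Q = 0 /\ snd A + snd B + snd Q = 0.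
Definition H3 (A B Q p : point) : Prop := -1/2 <= dot p A /\ -1/2 <= dot p B /\ -1/2 <= dot p Q.

Lemma unit_dot A : unitv A -> dot A A = 1.
Proof. intros H; unfold unitv in H. rewrite <- H. unfold dot; ring. Qed.

Lemma sqdist_dot A B : unitv A -> unitv B -> sqdist A B = 2 - 2 * dot A B.
Proof. intros HA HB. unfold unitv in *. unfold sqdist, dot.
  transitivity ((fst A ^2 + snd A ^2) + (fst B ^2 + snd B^2) - 2 * (fst A * fst B + snd A * snd B)); [ring|].
  rewrite HA, HB. ring. Qed.

Lemma gram A B Q :
  dot A A * (dot B B * dot Q Q - dot B Q * dot B Q) - dot A B * (dot A B * dot Q Q - dot B Q * dot Q A)
  + dot Q A * (dot A B * dot B Q - dot B B * dot Q A) = 0.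
Proof. unfold dot; ring. Qed.

Lemma norm3_of A B Q : on_circle A -> on_circle B -> on_circle Q ->
  0 < sqdist A B -> sqdist A B = sqdist B Q -> sqdist B Q = sqdist Q A -> norm3 A B Q.
Proof. intros HA HB HQ H0 H1 H2. fold (unitv A) in HA. fold (unitv B) in HB. fold (unitv Q) in HQ.
  rewrite !sqdist_dot in * by auto.
  assert (EBQ : dot B Q = dot A B) by lra. assert (EQA : dot Q A = dot A B) by lra.
  pose proof (gram A B Q) as G. rewrite EBQ, EQA, !unit_dot in G by auto.
  set (c := dot A B) in *.
  assert (Hc : (1 - c) * (1 - c) * (1 + 2 * c) = 0) by (rewrite <- G; ring).
  assert (Hc1 : 1 - c <> 0) by lra.
  assert (Hc2 : c = -1/2).
  { apply Rmult_integral in Hc. destruct Hc as [Hc|Hc]; [|lra].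
    apply Rmult_integral in Hc. lra. }
  assert (S : (fst A + fst B + fst Q) ^ 2 + (snd A + snd B + snd Q) ^ 2 = 0).
  { transitivity (dot A A + dot B B + dot Q Q + 2 * (dot A B + dot B Q + dot Q A)); [unfold dot; ring|].
    rewrite !unit_dot, EBQ, EQA by auto. fold c. lra. }
  apply sum_sq0 in S. unfold norm3. fold c. repeat split; try tauto; lra. Qed.

Lemma norm3_rot A B Q : norm3 A B Q -> norm3 B Q A.
Proof. unfold norm3; intros; intuition lra. Qed.
Lemma norm3_swap A B Q : norm3 A B Q -> norm3 A Q B.
Proof. unfold norm3; intros; rewrite !(dot_comm Q), (dot_comm B A) in *; intuition lra. Qed.

Lemma dot_lin a b c A B Q X :
  dot (a * fst A + b * fst B + c * fst Q, a * snd A + b * snd B + c * snd Q) X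
  = a * dot A X + b * dot B X + c * dot Q X.
Proof. unfold dot; simpl; ring. Qed.

Lemma norm3_cross A B Q : norm3 A B Q -> cross A B <> 0 /\ cross A Q = - cross A B.
Proof. intros (HA & HB & HQ & D1 & D2 & D3 & S1 & S2). split.
  - intros C. pose proof (lagrange A B) as L. unfold unitv in *. rewrite HA, HB, C, D1 in L. lra.
  - unfold cross. replace (fst Q) with (- fst A - fst B) by lra. replace (snd Q) with (- snd A - snd B) by lra. ring. Qed.

Lemma tri_H3 A B Q p : norm3 A B Q -> (Defs.triangle A B Q p <-> H3 A B Q p).
Proof. intros HN. pose proof HN as (HA & HB & HQ & D1 & D2 & D3 & S1 & S2).
  pose proof (unit_dot A HA) as E1. pose proof (unit_dot B HB) as E2. pose proof (unit_dot Q HQ) as E3.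
  assert (E4 : dot B A = -1/2) by (rewrite dot_comm; auto).
  assert (E5 : dot Q B = -1/2) by (rewrite dot_comm; auto).
  assert (E6 : dot A Q = -1/2) by (rewrite dot_comm; auto).
  split.
  - intros (a & b & c & Ha & Hb & Hc & Hs & Hp). subst p. unfold H3.
    rewrite !dot_lin, E1, E2, E3, E4, E5, E6, D1, D2, D3. lra.
  - intros (HpA & HpB & HpQ).
    assert (Sum : dot p A + dot p B + dot p Q = 0).
    { transitivity (fst p * (fst A + fst B + fst Q) + snd p * (snd A + snd B + snd Q)); [unfold dot; ring|].
      rewrite S1, S2; ring. }
    exists ((2 * dot p A + 1)/3), ((2 * dot p B + 1)/3), ((2 * dot p Q + 1)/3).
    split; [lra|split;[lra|split;[lra|split;[lra|]]]].
    set (a := (2 * dot p A + 1)/3). set (b := (2 * dot p B + 1)/3). set (c := (2 * dot p Q + 1)/3).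
    set (z := (a * fst A + b * fst B + c * fst Q - fst p, a * snd A + b * snd B + c * snd Q - snd p)).
    assert (Ez : forall X, dot z X = a * dot A X + b * dot B X + c * dot Q X - dot p X)
      by (intros; unfold z, dot; simpl; ring).
    destruct (zero_vec A B z (proj1 (norm3_cross A B Q HN))) as [Z1 Z2].
    + rewrite Ez, E1, E4, D3. unfold a, b, c. lra.
    + rewrite Ez, E2, D1, E5. unfold a, b, c. lra.
    + unfold z in Z1, Z2; simpl in Z1, Z2. destruct p; simpl in *; f_equal; lra. Qed.

Lemma norm3_neq A B Q : norm3 A B Q -> A <> B.
Proof. intros (HA & HB & _ & D1 & _). intros E. subst. rewrite unit_dot in D1 by auto. lra. Qed.

Lemma tri_det X Y Z Y' Z' : norm3 X Y Z -> norm3 X Y' Z' ->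
  forall p, H3 X Y Z p <-> H3 X Y' Z' p.
Proof. intros N1 N2.
  pose proof (norm3_neq _ _ _ (norm3_rot _ _ _ N1)) as NYZ.
  pose proof (norm3_neq _ _ _ (norm3_rot _ _ _ N2)) as NYZ'.
  destruct N1 as (HX & HY & HZ & D1 & D2 & D3 & _).
  destruct N2 as (_ & HY' & HZ' & D1' & D2' & D3' & _).
  set (q := (- fst X, - snd X)).
  assert (Eq : forall u, dot q u = - dot X u) by (intros; unfold q, dot; simpl; ring).
  assert (QY : dot q Y = 1/2) by (rewrite Eq; lra).
  assert (QZ : dot q Z = 1/2) by (rewrite Eq, dot_comm; lra).
  assert (QY' : dot q Y' = 1/2) by (rewrite Eq; lra).
  assert (QZ' : dot q Z' = 1/2) by (rewrite Eq, dot_comm; lra).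
  destruct (three_active q Y Z Y' HY HZ HY' QY QZ QY') as [E|[E|E]]; [contradiction| |];
  (destruct (three_active q Y Z Z' HY HZ HZ' QY QZ QZ') as [E'|[E'|E']]; [contradiction| |]);
  subst; try (exfalso; apply NYZ'; reflexivity); intros p; unfold H3; tauto. Qed.

Definition sel (t : point * point * point) (j : nat) : point :=
  match j with 0%nat => fst (fst t) | 1%nat => snd (fst t) | _ => snd t end.
Definition negp (p : point) : point := (- fst p, - snd p).

Lemma divmod3 i j : (j < 3)%nat -> ((3 * i + j) / 3 = i /\ (3 * i + j) mod 3 = j)%nat.
Proof. intros H. split; [symmetry; apply (Nat.div_unique _ _ _ j)|symmetry; apply (Nat.mod_unique _ _ i)]; lia. Qed.

Lemma decomp3 k n : (k < 3 * n)%nat -> exists i j, (i < n)%nat /\ (j < 3)%nat /\ k = (3 * i + j)%nat.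
Proof. intros H. exists (k / 3)%nat, (k mod 3)%nat. pose proof (Nat.div_mod_eq k 3).
  pose proof (Nat.mod_upper_bound k 3 ltac:(lia)). split; [|split]; lia. Qed.

Lemma vertex_ext (K1 K2 : point -> Prop) : (forall p, K1 p <-> K2 p) -> forall p, vertex K1 p <-> vertex K2 p.
Proof. intros H p. unfold vertex. split; intros [A B]; split; try (apply H; auto); intros C; apply B;
  destruct C as (x & y & t & C1 & C2 & C3); exists x, y, t; repeat split; try apply H; tauto. Qed.

Lemma norm3_sel t j : norm3 (sel t 0) (sel t 1) (sel t 2) -> (j < 3)%nat ->
  exists Y Z, norm3 (sel t j) Y Z /\ (forall p, H3 (sel t 0) (sel t 1) (sel t 2) p <-> H3 (sel t j) Y Z p)
   /\ (0 < cross (sel t j) Y \/ 0 < cross (sel t j) Z)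
   /\ (exists j1 j2, (j1 < 3)%nat /\ (j2 < 3)%nat /\ Y = sel t j1 /\ Z = sel t j2).
Proof. intros HN Hj. destruct t as [[A B] Q]; simpl in *.
  assert (Hc : forall X Y Z, norm3 X Y Z -> 0 < cross X Y \/ 0 < cross X Z).
  { intros X Y Z N. destruct (norm3_cross X Y Z N) as [C1 C2]. rewrite C2.
    destruct (Rlt_dec 0 (cross X Y)); [left; auto|right]. apply Rnot_lt_le in n. lra. }
  assert (Hsel : forall j', (j' < 3)%nat -> sel (A, B, Q) j' = A \/ sel (A, B, Q) j' = B \/ sel (A, B, Q) j' = Q).
  { intros j' Hj'. destruct j' as [|[|[|]]]; simpl; auto; lia. }
  destruct j as [|[|[|]]]; simpl; try lia.
  - exists B, Q. split; [auto|split;[|split]]. tauto. apply Hc; auto. exists 1%nat, 2%nat; simpl; repeat split; auto.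
  - exists Q, A. pose proof (norm3_rot _ _ _ HN). split; [auto|split;[|split]]. unfold H3; tauto.
    apply Hc; auto. exists 2%nat, 0%nat; simpl; repeat split; auto.
  - exists A, B. pose proof (norm3_rot _ _ _ (norm3_rot _ _ _ HN)). split; [auto|split;[|split]]. unfold H3; tauto.
    apply Hc; auto. exists 0%nat, 1%nat; simpl; repeat split; auto. Qed.

Lemma sel_inj t j j' : norm3 (sel t 0) (sel t 1) (sel t 2) -> (j < 3)%nat -> (j' < 3)%nat ->
  sel t j = sel t j' -> j = j'.
Proof. intros HN Hj Hj' E. destruct t as [[A B] Q]; simpl in *.
  pose proof (norm3_neq _ _ _ HN). pose proof (norm3_neq _ _ _ (norm3_rot _ _ _ HN)).
  pose proof (norm3_neq _ _ _ (norm3_rot _ _ _ (norm3_rot _ _ _ HN))).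
  destruct j as [|[|[|]]]; destruct j' as [|[|[|]]]; simpl in E; try lia; try congruence. Qed.

Lemma cross_neg a b : cross (negp a) (negp b) = cross a b.
Proof. unfold cross, negp; simpl; ring. Qed.
Lemma dot_neg p a : dot p (negp a) = - dot p a.
Proof. unfold dot, negp; simpl; ring. Qed.

Theorem mainTheorem12 (n : nat) (T : nat -> point -> Prop) :
  (2 <= n)%nat ->
  (forall i, (i < n)%nat -> in_E (T i)) ->
  (forall i j, (i < n)%nat -> (j < n)%nat -> i <> j ->
     ~ (forall p, T i p <-> T j p)) ->
  exists S : list point,
    NoDup S /\ length S = (3 * n)%nat /\
    (forall p, In p S <-> vertex (big_inter n T) p).
Proof.
  intros Hn HE HD.
  assert (Hc : forall i, exists t : point * point * point, (i < n)%nat ->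
     norm3 (sel t 0) (sel t 1) (sel t 2) /\ forall p, T i p <-> H3 (sel t 0) (sel t 1) (sel t 2) p).
  { intros i. destruct (Compare_dec.lt_dec i n) as [Hi|Hi].
    - destruct (HE i Hi) as [_ (A & B & Q & HA & HB & HQ & H0 & H1 & H2 & HT)].
      exists (A, B, Q). intros _. simpl. pose proof (norm3_of A B Q HA HB HQ H0 H1 H2) as HN.
      split; auto. intros p. rewrite HT. apply tri_H3; auto.
    - exists ((0,0),(0,0),(0,0)). intros; lia. }
  set (F := fun i => proj1_sig (constructive_indefinite_description _ (Hc i))).
  assert (HF : forall i, (i<n)%nat -> norm3 (sel (F i) 0) (sel (F i) 1) (sel (F i) 2) /\
      forall p, T i p <-> H3 (sel (F i) 0) (sel (F i) 1) (sel (F i) 2) p).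
  { intros i Hi. unfold F. destruct (constructive_indefinite_description _ (Hc i)) as [t Ht]. simpl. auto. }
  clearbody F.
  set (N := fun k : nat => negp (sel (F (k / 3)%nat) (k mod 3)%nat)).
  assert (HN : forall i j, (j < 3)%nat -> N (3*i+j)%nat = negp (sel (F i) j)).
  { intros i j Hj. unfold N. destruct (divmod3 i j Hj) as [-> ->]. auto. }
  clearbody N.
  assert (HK : forall p, Kset (3*n) N p <-> big_inter n T p).
  { intros p. split.
    - intros K i Hi. apply (proj2 (HF i Hi)). unfold H3.
      assert (H : forall j, (j<3)%nat -> -1/2 <= dot p (sel (F i) j)).
      { intros j Hj. pose proof (K (3*i+j)%nat ltac:(lia)) as H. rewrite HN, dot_neg in H; auto. lra. }
      split; [|split]; apply H; lia.
    - intros B k Hk. destruct (decomp3 k n Hk) as (i & j & Hi & Hj & ->). rewrite HN, dot_neg by auto.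
      pose proof (proj1 (proj2 (HF i Hi) p) (B i Hi)) as (H0 & H1 & H2).
      destruct j as [|[|[|]]]; [lra|lra|lra|lia]. }
  destruct (abstract_poly (3*n) N) as (S & S1 & S2 & S3).
  - intros k Hk. destruct (decomp3 k n Hk) as (i & j & Hi & Hj & ->). rewrite HN by auto.
    destruct (HF i Hi) as [(U0 & U1 & U2 & _) _].
    assert (U : unitv (sel (F i) j)) by (destruct j as [|[|[|]]]; auto; lia).
    unfold unitv, negp in *; simpl fst; simpl snd. rewrite <- U. ring.
  - intros k k' Hk Hk' E. destruct (decomp3 k n Hk) as (i & j & Hi & Hj & ->).
    destruct (decomp3 k' n Hk') as (i' & j' & Hi' & Hj' & ->).
    rewrite !HN in E by auto. unfold negp in E. injection E as E1 E2.
    assert (E : sel (F i) j = sel (F i') j').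
    { destruct (sel (F i) j), (sel (F i') j'); simpl in *; f_equal; lra. }
    destruct (Nat.eq_dec i i') as [<-|Hne].
    + assert (j = j') by (apply (sel_inj (F i)); auto; apply HF; auto). subst; auto.
    + exfalso. apply (HD i i' Hi Hi' Hne). intros p.
      destruct (HF i Hi) as [N1 T1]. destruct (HF i' Hi') as [N2 T2].
      destruct (norm3_sel (F i) j N1 Hj) as (Y & Z & M1 & R1 & _).
      destruct (norm3_sel (F i') j' N2 Hj') as (Y' & Z' & M2 & R2 & _).
      rewrite E in M1, R1. rewrite T1, T2, R1, R2. apply tri_det; auto.
  - intros k Hk. destruct (decomp3 k n Hk) as (i & j & Hi & Hj & ->).
    destruct (HF i Hi) as [N1 _].
    destruct (norm3_sel (F i) j N1 Hj) as (Y & Z & M1 & _ & C & j1 & j2 & J1 & J2 & EY & EZ).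
    destruct C as [C|C]; [exists (3*i+j1)%nat|exists (3*i+j2)%nat]; (split; [lia|]);
      rewrite !HN, cross_neg by auto; subst; auto.
  - exists S. split; auto. split; auto. intros p. rewrite S3. apply vertex_ext. auto.
Qed.
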